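(* Let $\Gamma$ be a group and $S$ a $\Gamma$-graded semigroup with local units. The following are equivalent: (1) $S$ is strongly graded; (2) $S_\alpha S_{\alpha^{-1}}=S_\varepsilon$ for every $\alpha\in\Gamma$; (3) $S_\alpha S_{\alpha^{-1}}$ contains all the local units of $S$ for every $\alpha\in\Gamma$. Moreover, if $S$ is an inverse semigroup, these are also equivalent to each of: (4) $E(S)=\{ss^{-1}:s\in S_\alpha\}$ for every $\alpha$; (5) $E(S)=\{s^{-1}s:s\in S_\alpha\}$ for every $\alpha$; (6) for all $u\in E(S)$ and $\alpha\in\Gamma$ there is $s\in S_\alpha$ with $u\,\mathscr L\,s$; (7) for all $u\in E(S)$ and $\alpha\in\Gamma$ there is $s\in S_\alpha$ with $u\,\mathscr R\,s$.
   Context: Semigroups have a zero; $S$ is $\Gamma$-graded via $\deg:S\setminus\{0\}\to\Gamma$ with $\deg(st)=\deg(s)\deg(t)$ whenever $st\neq0$; $S_\alpha=\deg^{-1}(\alpha)\cup\{0\}$, $\varepsilon$ the identity of $\Gamma$, and $S_\alpha S_\beta=\{st:s\in S_\alpha,t\in S_\beta\}$. $S$ is strongly graded if $S_\alpha S_\beta=S_{\alpha\beta}$ for all $\alpha,\beta$. $E(S)$ is the set of idempotents. $S$ has local units if for each $s$ there are $u,v\in E(S)$ with $us=s=sv$; such idempotents are called local units. Green's relations: $s\,\mathscr L\,t$ iff $S^1s=S^1t$ and $s\,\mathscr R\,t$ iff $sS^1=tS^1$, where $S^1$ is $S$ with an identity adjoined. *)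

(* Defs.v *)
Record Group := {
  g_car :> Type;
  g_mul : g_car -> g_car -> g_car;
  g_one : g_car;
  g_inv : g_car -> g_car;
  g_mulA : forall a b c, g_mul a (g_mul b c) = g_mul (g_mul a b) c;
  g_mul1l : forall a, g_mul g_one a = a;
  g_mul1r : forall a, g_mul a g_one = a;
  g_mulVl : forall a, g_mul (g_inv a) a = g_one;
  g_mulVr : forall a, g_mul a (g_inv a) = g_one
}.

Record Semigroup0 := {
  s_car :> Type;
  s_mul : s_car -> s_car -> s_car;
  s_zero : s_car;
  s_mulA : forall a b c, s_mul a (s_mul b c) = s_mul (s_mul a b) c;
  s_mul0l : forall a, s_mul s_zero a = s_zero;
  s_mul0r : forall a, s_mul a s_zero = s_zero
}.

Section Defs.
Variable (G : Group) (S : Semigroup0).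

Local Notation "x * y" := (s_mul S x y).
Local Notation "0" := (s_zero S).

(* deg : S \ {0} -> G, represented as a total function whose value at 0
   is irrelevant; deg(st) = deg(s)deg(t) whenever st <> 0. *)
Definition is_grading (deg : S -> G) : Prop :=
  forall s t : S, s * t <> 0 -> deg (s * t) = g_mul G (deg s) (deg t).

Definition homog (deg : S -> G) (a : G) (s : S) : Prop :=
  s = 0 \/ (s <> 0 /\ deg s = a).

Definition setmul (A B : S -> Prop) (x : S) : Prop :=
  exists s t, A s /\ B t /\ x = s * t.

Definition set_eq (A B : S -> Prop) : Prop := forall x, A x <-> B x.

Definition strongly_graded (deg : S -> G) : Prop :=
  forall a b : G, set_eq (setmul (homog deg a) (homog deg b))
                         (homog deg (g_mul G a b)).

Definition idempotent (e : S) : Prop := e * e = e.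

Definition has_local_units : Prop :=
  forall s : S, exists u v, idempotent u /\ idempotent v /\ u * s = s /\ s * v = s.

Definition local_unit (u : S) : Prop :=
  idempotent u /\ exists s : S, u * s = s \/ s * u = s.

(* inv is the inverse operation of an inverse semigroup: every s has a
   unique t with sts = s and tst = t, namely t = inv s. *)
Definition inverse_semigroup_inv (inv : S -> S) : Prop :=
  forall s : S, (s * inv s * s = s /\ inv s * s * inv s = inv s) /\
    forall t : S, s * t * s = s -> t * s * t = t -> t = inv s.

Definition S1_left (s : S) (x : S) : Prop := x = s \/ exists y, x = y * s.
Definition S1_right (s : S) (x : S) : Prop := x = s \/ exists y, x = s * y.

Definition greenL (s t : S) : Prop := set_eq (S1_left s) (S1_left t).
Definition greenR (s t : S) : Prop := set_eq (S1_right s) (S1_right t).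

End Defs.
Arguments is_grading {G S}.
Arguments homog {G S}.
Arguments setmul {S}.
Arguments set_eq {S}.
Arguments strongly_graded {G S}.
Arguments idempotent {S}.
Arguments local_unit {S}.
Arguments inverse_semigroup_inv {S}.
Arguments greenL {S}.
Arguments greenR {S}.

(* Main.v *)
Require Import Defs.
From Stdlib Require Import Classical.

Section Aux.
Variable (G : Group) (S : Semigroup0) (deg : S -> G).
Hypothesis Hdeg : is_grading deg.
Local Notation "x * y" := (s_mul S x y).
Local Notation "0" := (s_zero S).
Local Notation gm := (g_mul G).
Local Notation gi := (g_inv G).
Local Notation g1 := (g_one G).

Lemma g_canl (a x y : G) : gm a x = gm a y -> x = y.
Proof.
  intro H. rewrite <- (g_mul1l G x), <- (g_mul1l G y), <- (g_mulVl G a),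
    <- !g_mulA, H. reflexivity.
Qed.

Lemma g_canr (a x y : G) : gm x a = gm y a -> x = y.
Proof.
  intro H. rewrite <- (g_mul1r G x), <- (g_mul1r G y), <- (g_mulVr G a),
    !g_mulA, H. reflexivity.
Qed.

Lemma g_idem (x : G) : x = gm x x -> x = g1.
Proof. intro H. apply (g_canl x). rewrite g_mul1r. symmetry; exact H. Qed.

Lemma g_invinv (a : G) : gi (gi a) = a.
Proof. apply (g_canl (gi a)). rewrite g_mulVr, g_mulVl. reflexivity. Qed.

Lemma g_aba (a b : G) : gm (gm a b) a = a -> b = gi a.
Proof.
  intro H. apply (g_canl a). rewrite g_mulVr. apply (g_canr a).
  rewrite H, g_mul1l. reflexivity.
Qed.

Lemma mul0l' (s t : S) : s * t <> 0 -> s <> 0.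
Proof. intros H E. apply H. rewrite E. apply s_mul0l. Qed.
Lemma mul0r' (s t : S) : s * t <> 0 -> t <> 0.
Proof. intros H E. apply H. rewrite E. apply s_mul0r. Qed.

Lemma homog_mul a b s t : homog deg a s -> homog deg b t ->
  homog deg (gm a b) (s * t).
Proof.
  intros Hs Ht. destruct (classic (s * t = 0)) as [E|E]; [left; exact E|].
  right; split; [exact E|]. rewrite Hdeg by exact E.
  destruct Hs as [Hs|[_ Hs]]; [exfalso; exact (mul0l' _ _ E Hs)|].
  destruct Ht as [Ht|[_ Ht]]; [exfalso; exact (mul0r' _ _ E Ht)|].
  rewrite Hs, Ht; reflexivity.
Qed.

Lemma idem_homog e : idempotent e -> homog deg g1 e.
Proof.
  intro He. destruct (classic (e = 0)) as [E|E]; [left; exact E|].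
  right; split; [exact E|]. apply g_idem. rewrite <- Hdeg; unfold idempotent in He;
  rewrite He; [reflexivity|exact E].
Qed.

Variable inv : S -> S.
Hypothesis Hinv : inverse_semigroup_inv inv.

Lemma inv0 : inv 0 = 0.
Proof.
  symmetry. apply (proj2 (Hinv 0)); rewrite !s_mul0l; reflexivity.
Qed.

Lemma inv_l s : s * inv s * s = s.
Proof. exact (proj1 (proj1 (Hinv s))). Qed.
Lemma inv_r s : inv s * s * inv s = inv s.
Proof. exact (proj2 (proj1 (Hinv s))). Qed.

Lemma homog_inv a s : homog deg a s -> homog deg (gi a) (inv s).
Proof.
  intros [Hs|[Hs Hd]]. { left. rewrite Hs. exact inv0. }
  assert (H1 : s * inv s * s <> 0) by (rewrite inv_l; exact Hs).
  assert (H2 : s * inv s <> 0) by exact (mul0l' _ _ H1).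
  right; split; [exact (mul0r' _ _ H2)|].
  rewrite <- Hd. apply g_aba.
  rewrite <- Hdeg by exact H2. rewrite <- Hdeg by exact H1.
  rewrite inv_l. reflexivity.
Qed.

Lemma inv_l' x s : x * s * inv s * s = x * s.
Proof. rewrite <- !s_mulA, (s_mulA S s), inv_l. reflexivity. Qed.

Lemma idem_si s : idempotent (s * inv s).
Proof. unfold idempotent. rewrite s_mulA, inv_l. reflexivity. Qed.
Lemma idem_is s : idempotent (inv s * s).
Proof. unfold idempotent. rewrite s_mulA, inv_r. reflexivity. Qed.

End Aux.
Theorem proposition2p12 (G : Group) (S : Semigroup0) (deg : S -> G)
  (Hdeg : is_grading deg) (Hlu : has_local_units S) :
  let P1 := strongly_graded deg in
  let P2 := forall a : G,
      set_eq (setmul (homog deg a) (homog deg (g_inv G a))) (homog deg (g_one G)) in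
  let P3 := forall a : G, forall u : S,
      local_unit u -> setmul (homog deg a) (homog deg (g_inv G a)) u in
  (P1 <-> P2) /\ (P1 <-> P3) /\
  (forall inv : S -> S, inverse_semigroup_inv inv ->
     (P1 <-> (forall a : G, forall e : S,
                idempotent e <-> exists s, homog deg a s /\ e = s_mul S s (inv s))) /\
     (P1 <-> (forall a : G, forall e : S,
                idempotent e <-> exists s, homog deg a s /\ e = s_mul S (inv s) s)) /\
     (P1 <-> (forall (u : S) (a : G), idempotent u ->
                exists s, homog deg a s /\ greenL u s)) /\
     (P1 <-> (forall (u : S) (a : G), idempotent u ->
                exists s, homog deg a s /\ greenR u s))).
Proof.
  intros P1 P2 P3.
  assert (H13 : P1 -> P3).
  { intros H a u [Hu _]. apply (H a (g_inv G a)). rewrite g_mulVr.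
    apply idem_homog; assumption. }
  assert (H31 : P3 -> P1).
  { intros H a b x; split.
    - intros (s&t&Hs&Ht&->). apply homog_mul; assumption.
    - intros [Hx|[Hx Hd]].
      + exists (s_zero S), (s_zero S). split; [left; reflexivity|].
        split; [left; reflexivity|]. rewrite Hx, s_mul0l. reflexivity.
      + destruct (Hlu x) as (u&v&Hu&Hv&Hux&_).
        destruct (H a u (conj Hu (ex_intro _ x (or_introl Hux)))) as (s&t&Hs&Ht&Eu).
        exists s, (s_mul S t x). split; [exact Hs|split].
        * assert (K := homog_mul G S deg Hdeg _ _ _ _ Ht (or_intror (conj Hx Hd))).
          rewrite g_mulA, g_mulVl, g_mul1l in K. exact K.
        * rewrite s_mulA, <- Eu, Hux. reflexivity. }
  assert (H12 : P1 -> P2).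
  { intros H a. pose proof (H a (g_inv G a)) as K. rewrite g_mulVr in K. exact K. }
  assert (H23 : P2 -> P3).
  { intros H a u [Hu _]. apply (H a). apply idem_homog; assumption. }
  split; [tauto|]. split; [tauto|].
  intros inv Hinv.
  assert (H4 : P1 -> forall a : G, forall e : S,
                idempotent e <-> exists s, homog deg a s /\ e = s_mul S s (inv s)).
  { intros H a e; split.
    - intro He. destruct (H13 H a e (conj He (ex_intro _ e (or_introl He))))
        as (s&t&Hs&Ht&Ee). subst e.
      assert (E1 : s_mul S (s_mul S (s_mul S s t) s) t = s_mul S s t)
        by (unfold idempotent in He; rewrite s_mulA in He; exact He).
      assert (E2 : forall x, s_mul S (s_mul S (s_mul S (s_mul S x s) t) s) t
                              = s_mul S (s_mul S x s) t).
      { intro x. transitivity (s_mul S x (s_mul S (s_mul S (s_mul S s t) s) t)).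
        - rewrite !s_mulA; reflexivity.
        - rewrite E1, s_mulA; reflexivity. }
      exists (s_mul S (s_mul S s t) s). split.
      + pose proof (homog_mul G S deg Hdeg _ _ _ _ (idem_homog G S deg Hdeg _ He) Hs) as K.
        rewrite g_mul1l in K. exact K.
      + assert (Ei : s_mul S t (s_mul S s t) = inv (s_mul S (s_mul S s t) s)).
        { apply (proj2 (Hinv _)); repeat rewrite s_mulA; repeat (rewrite E1 || rewrite E2);
          reflexivity. }
        rewrite <- Ei. repeat rewrite s_mulA; repeat (rewrite E1 || rewrite E2); reflexivity.
    - intros (s&_&->). apply idem_si; assumption. }
  assert (H5 : P1 -> forall a : G, forall e : S,
                idempotent e <-> exists s, homog deg a s /\ e = s_mul S (inv s) s).
  { intros H a e; split.
    - intro He. destruct (H13 H (g_inv G a) e (conj He (ex_intro _ e (or_introl He))))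
        as (s&t&Hs&Ht&Ee). subst e. rewrite g_invinv in Ht.
      assert (E1 : s_mul S (s_mul S (s_mul S s t) s) t = s_mul S s t)
        by (unfold idempotent in He; rewrite s_mulA in He; exact He).
      assert (E2 : forall x, s_mul S (s_mul S (s_mul S (s_mul S x s) t) s) t
                              = s_mul S (s_mul S x s) t).
      { intro x. transitivity (s_mul S x (s_mul S (s_mul S (s_mul S s t) s) t)).
        - rewrite !s_mulA; reflexivity.
        - rewrite E1, s_mulA; reflexivity. }
      exists (s_mul S t (s_mul S s t)). split.
      + pose proof (homog_mul G S deg Hdeg _ _ _ _ Ht (idem_homog G S deg Hdeg _ He)) as K.
        rewrite g_mul1r in K. exact K.
      + assert (Ei : s_mul S (s_mul S s t) s = inv (s_mul S t (s_mul S s t))).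
        { apply (proj2 (Hinv _)); repeat rewrite s_mulA; repeat (rewrite E1 || rewrite E2);
          reflexivity. }
        rewrite <- Ei. repeat rewrite s_mulA; repeat (rewrite E1 || rewrite E2); reflexivity.
    - intros (s&_&->). apply idem_is; assumption. }
  split; [|split; [|split]].
  - split; [exact H4|]. intro H. apply H31. intros a u [Hu _].
    destruct (proj1 (H a u) Hu) as (s&Hs&->). exists s, (inv s).
    split; [exact Hs|split; [apply homog_inv; assumption|reflexivity]].
  - split; [exact H5|]. intro H. apply H31. intros a u [Hu _].
    destruct (proj1 (H (g_inv G a) u) Hu) as (s&Hs&->). exists (inv s), s.
    split; [|split; [exact Hs|reflexivity]].
    pose proof (homog_inv G S deg Hdeg inv Hinv _ _ Hs) as K. rewrite g_invinv in K. exact K.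
  - split.
    + intros H u a Hu. destruct (proj1 (H5 H a u) Hu) as (r&Hr&Eu).
      exists r. split; [exact Hr|]. intro x; split.
      * intros [->|[y ->]]; right.
        -- exists (inv r). exact Eu.
        -- exists (s_mul S y (inv r)). rewrite Eu, s_mulA. reflexivity.
      * intros [->|[y ->]]; right.
        -- exists r. rewrite Eu, s_mulA, inv_l by assumption. reflexivity.
        -- exists (s_mul S y r). rewrite Eu, s_mulA, inv_l' by assumption. reflexivity.
    + intro H. apply H31. intros a u [Hu _].
      destruct (H u (g_inv G a) Hu) as (s&Hs&HL).
      assert (E : s_mul S (s_mul S u (inv s)) s = u).
      { destruct (proj1 (HL u) (or_introl eq_refl)) as [E|[y E]]; rewrite E.
        - apply inv_l; assumption.
        - apply inv_l'; assumption. }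
      exists (s_mul S u (inv s)), s. split; [|split; [exact Hs|symmetry; exact E]].
      pose proof (homog_mul G S deg Hdeg _ _ _ _ (idem_homog G S deg Hdeg _ Hu)
                    (homog_inv G S deg Hdeg inv Hinv _ _ Hs)) as K.
      rewrite g_mul1l, g_invinv in K. exact K.
  - split.
    + intros H u a Hu. destruct (proj1 (H4 H a u) Hu) as (r&Hr&Eu).
      exists r. split; [exact Hr|]. intro x; split.
      * intros [->|[y ->]]; right.
        -- exists (inv r). exact Eu.
        -- exists (s_mul S (inv r) y). rewrite Eu, s_mulA. reflexivity.
      * intros [->|[y ->]]; right.
        -- exists r. rewrite Eu, inv_l by assumption. reflexivity.
        -- exists (s_mul S r y). rewrite Eu, s_mulA, inv_l by assumption. reflexivity.
    + intro H. apply H31. intros a u [Hu _].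
      destruct (H u a Hu) as (s&Hs&HR).
      assert (E : s_mul S s (s_mul S (inv s) u) = u).
      { destruct (proj1 (HR u) (or_introl eq_refl)) as [E|[y E]]; rewrite E.
        - rewrite s_mulA. apply inv_l; assumption.
        - rewrite !s_mulA, inv_l by assumption. reflexivity. }
      exists s, (s_mul S (inv s) u). split; [exact Hs|split; [|symmetry; exact E]].
      pose proof (homog_mul G S deg Hdeg _ _ _ _ (homog_inv G S deg Hdeg inv Hinv _ _ Hs)
                    (idem_homog G S deg Hdeg _ Hu)) as K.
      rewrite g_mul1r in K. exact K.
Qed.
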